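(* Let $\mathfrak{s}$ be a finite-dimensional real Lie algebra and let $J$ be an abelian complex structure on $\mathfrak{s}$. Then there exists an increasing sequence $\{0\}=\mathfrak{s}_0\subset\mathfrak{s}_1\subset\cdots\subset\mathfrak{s}_{r-1}\subset\mathfrak{s}_r=\mathfrak{s}$ of $J$-stable ideals of $\mathfrak{s}$ such that, for each $1\le j\le r$, the quotient $\mathfrak{s}_j/\mathfrak{s}_{j-1}$ (with the complex structure induced by $J$) is holomorphically isomorphic to a central extension of $\mathfrak{aff}(A_j)$, equipped with the abelian complex structure $J(a,b)=(b,-a)$, for some finite-dimensional real commutative associative algebra $A_j$. Here ''central extension of $\mathfrak{aff}(A_j)$'' means a Lie algebra $\mathfrak{h}$ with abelian complex structure $J_{\mathfrak h}$ whose center $\mathfrak{z}(\mathfrak h)$ is $J_{\mathfrak h}$-stable and such that $\mathfrak h/\mathfrak z(\mathfrak h)$ with the induced structure is holomorphically isomorphic to $\mathfrak{aff}(A_j)$.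
   Context: A complex structure on a real Lie algebra $\mathfrak g$ is a linear map $J:\mathfrak g\to\mathfrak g$ with $J^2=-\mathrm{Id}$ and $J[x,y]-[Jx,y]-[x,Jy]-J[Jx,Jy]=0$ for all $x,y\in\mathfrak g$. An abelian complex structure is a linear map $J$ with $J^2=-\mathrm{Id}$ and $[Jx,Jy]=[x,y]$ for all $x,y$ (such $J$ is automatically a complex structure). For a finite-dimensional real associative algebra $A$, $\mathfrak{aff}(A)$ is the Lie algebra $A\oplus A$ with bracket $[(a,b),(a',b')]=(aa'-a'a,\ ab'-a'b)$; when $A$ is commutative this is $[(a,b),(a',b')]=(0,ab'-a'b)$, and $J(a,b)=(b,-a)$ is an abelian complex structure on it. A holomorphic isomorphism between Lie algebras with complex structures $(\mathfrak g_1,J_1)$, $(\mathfrak g_2,J_2)$ is a Lie algebra isomorphism $f$ with $f\circ J_1=J_2\circ f$. A $J$-stable ideal $I$ gives an induced endomorphism on $\mathfrak s/I$. *)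

(* Defs.v *)
From HB Require Import structures.
From mathcomp Require Import all_boot all_order all_algebra.
From mathcomp Require Import reals.
Set Implicit Arguments. Unset Strict Implicit. Unset Printing Implicit Defensive.
Import GRing.Theory.
Local Open Scope ring_scope.

Section LieDefs.
Variable K : fieldType.

Definition lin (U W : vectType K) (f : U -> W) : Prop :=
  forall (a : K) (x y : U), f (a *: x + y) = a *: f x + f y.

Definition is_Lie_bracket (V : vectType K) (br : V -> V -> V) : Prop :=
  [/\ (forall x, lin (br x)),
      (forall y, lin (fun x => br x y)),
      (forall x, br x x = 0) &
      (forall x y z, br x (br y z) + br y (br z x) + br z (br x y) = 0)].

Definition abelian_cs (V : vectType K) (br : V -> V -> V) (J : V -> V) : Prop :=
  [/\ lin J, (forall x, J (J x) = - x) & (forall x y, br (J x) (J y) = br x y)].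

Definition lie_ideal (V : vectType K) (br : V -> V -> V) (I : {vspace V}) : Prop :=
  forall x y, y \in I -> br x y \in I.

Definition J_stable (V : vectType K) (J : V -> V) (I : {vspace V}) : Prop :=
  forall x, x \in I -> J x \in I.

Definition in_center (V : vectType K) (br : V -> V -> V) (x : V) : Prop :=
  forall y, br x y = 0.

Definition comm_assoc_alg (A : vectType K) (m : A -> A -> A) : Prop :=
  [/\ (forall a, lin (m a)), (forall b, lin (fun a => m a b)),
      (forall a b, m a b = m b a) &
      (forall a b c, m a (m b c) = m (m a b) c)].

(* aff(A) = A (+) A, with bracket [(a,b),(a',b')] = (0, ab' - a'b) (A commutative) *)
Definition aff_bracket (A : vectType K) (m : A -> A -> A) (p q : (A * A)%type)
  : (A * A)%type := (0, m p.1 q.2 - m q.1 p.2).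

Definition aff_J (A : vectType K) (p : (A * A)%type) : (A * A)%type := (p.2, - p.1).

(* The isomorphism h/z(h) ~ aff(A) is encoded (first isomorphism theorem) as a
   surjective linear map g : h -> A*A with kernel exactly z(h), which is a Lie
   algebra morphism and intertwines Jh with aff_J. *)
Definition central_ext_of_aff (h : vectType K) (brh : h -> h -> h) (Jh : h -> h)
  (A : vectType K) (m : A -> A -> A) : Prop :=
  [/\ is_Lie_bracket brh, abelian_cs brh Jh,
      (forall x, in_center brh x -> in_center brh (Jh x)) &
      exists g : h -> (A * A)%type,
        [/\ lin g,
            (forall p, exists x, g x = p),
            (forall x, g x = 0 <-> in_center brh x),
            (forall x y, g (brh x y) = aff_bracket m (g x) (g y)) &
            (forall x, g (Jh x) = aff_J (g x))]].

(* Ihi / Ilo (with the structure induced by br, J) is holomorphically isomorphic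
   to (h, brh, Jh): encoded as a linear map f : V -> h whose restriction to Ihi
   is onto h, has kernel exactly Ilo, preserves brackets and intertwines J, Jh. *)
Definition quotient_holo_iso (V : vectType K) (br : V -> V -> V) (J : V -> V)
  (Ilo Ihi : {vspace V}) (h : vectType K) (brh : h -> h -> h) (Jh : h -> h) : Prop :=
  exists f : V -> h,
    [/\ lin f,
        (forall y, exists2 x, x \in Ihi & f x = y),
        (forall x, x \in Ihi -> (f x = 0 <-> x \in Ilo)),
        (forall x y, x \in Ihi -> y \in Ihi -> f (br x y) = brh (f x) (f y)) &
        (forall x, x \in Ihi -> f (J x) = Jh (f x))].

End LieDefs.

(* Main.v *)
Require Import Defs.
From HB Require Import structures.
From mathcomp Require Import all_boot all_order all_algebra.
From mathcomp Require Import reals ring.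
Set Implicit Arguments. Unset Strict Implicit. Unset Printing Implicit Defensive.
Import GRing.Theory.
Local Open Scope ring_scope.

Lemma addf0 (M N : zmodType) (g : M -> N) : (forall x y, g (x + y) = g x + g y) -> g 0 = 0.
Proof. move=> h; apply/(addrI (g 0)); by rewrite addr0 -h addr0. Qed.

Lemma addfN (M N : zmodType) (g : M -> N) : (forall x y, g (x + y) = g x + g y) -> forall x, g (- x) = - g x.
Proof.
move=> h x; apply/(addrI (g x)); by rewrite -h !subrr (addf0 h).
Qed.

Section LinFacts.
Variables (K : fieldType) (U W : vectType K) (f : U -> W).
Hypothesis Hf : lin f.
Lemma linD x y : f (x + y) = f x + f y.
Proof. by have := Hf 1 x y; rewrite !scale1r. Qed.
Lemma lin0 : f 0 = 0. Proof. by apply: addf0; exact: linD. Qed.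
Lemma linZ a x : f (a *: x) = a *: f x.
Proof. by have := Hf a x 0; rewrite !addr0 lin0 addr0. Qed.
Lemma linN x : f (- x) = - f x. Proof. by apply: addfN; exact: linD. Qed.
Lemma linB x y : f (x - y) = f x - f y.
Proof. by rewrite linD linN. Qed.
End LinFacts.

Section Ito.
Variables (T : zmodType) (b : T -> T -> T) (PA PB : T -> Prop).
Hypothesis bDl : forall x y z, b (x + y) z = b x z + b y z.
Hypothesis bDr : forall x y z, b x (y + z) = b x y + b x z.
Hypothesis bC : forall x y, b x y = - b y x.
Hypothesis bJ : forall x y z, b x (b y z) = b (b x y) z + b y (b x z).
Hypothesis hA : forall a a', PA a -> PA a' -> b a a' = 0.
Hypothesis hB : forall a a', PB a -> PB a' -> b a a' = 0.
Hypothesis hdec : forall w, exists a, exists c, [/\ PA a, PB c & w = a + c].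

Lemma ito a c a1 c1 : PA a -> PB c -> PA a1 -> PB c1 ->
  b (b a c) (b a1 c1) = 0.
Proof.
move=> Aa Bc Aa1 Bc1.
have bNr x y : b x (- y) = - b x y by apply: addfN.
have b0r x : b x 0 = 0 by apply: addf0.
have [al [be [Aal Bbe Edec]]] := hdec (b c a1).
have [al' [be' [Aal' Bbe' Edec']]] := hdec (b a c1).
have E1 : b (b a c) a1 = b a be.
  have := bJ a c a1; rewrite (hA Aa Aa1) b0r addr0 => <-.
  by rewrite Edec bDr (hA Aa Aal) add0r.
have E2 : b (b a c) c1 = b al' c.
  have := bJ a c c1; rewrite (hB Bc Bc1) b0r => /esym/eqP; rewrite addr_eq0 => /eqP ->.
  by rewrite -bC Edec' bDl (hB Bbe' Bc) addr0.
rewrite bJ E1 E2.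
have T1 : b (b a be) c1 = b al' be.
  have := bJ a be c1; rewrite (hB Bbe Bc1) b0r => /esym/eqP; rewrite addr_eq0 => /eqP ->.
  by rewrite -bC Edec' bDl (hB Bbe' Bbe) addr0.
have T2 : b a1 (b al' c) = - b al' be.
  rewrite bJ (hA Aa1 Aal') (bC 0) b0r oppr0 add0r (bC a1) Edec bNr bDr (hA Aal' Aal) add0r //.
by rewrite T1 T2 subrr.
Qed.
End Ito.

From Stdlib Require Import Classical ClassicalEpsilon.
From mathcomp Require Import zify.

Lemma vsval0 (K : fieldType) (W : vectType K) (U : {vspace W}) : vsval (0 : subvs_of U) = 0.
Proof. exact: raddf0. Qed.
Lemma vsvalD (K : fieldType) (W : vectType K) (U : {vspace W}) (x y : subvs_of U) : vsval (x + y) = vsval x + vsval y.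
Proof. exact: raddfD. Qed.
Lemma vsvalZ (K : fieldType) (W : vectType K) (U : {vspace W}) a (x : subvs_of U) : vsval (a *: x) = a *: vsval x.
Proof. exact: linearZ. Qed.
Lemma vsvalN (K : fieldType) (W : vectType K) (U : {vspace W}) (x : subvs_of U) : vsval (- x) = - vsval x.
Proof. exact: raddfN. Qed.

Section VspaceFacts.
Variables (K : fieldType) (W : vectType K).

Lemma pred_vspace (P : W -> Prop) : P 0 -> (forall a x y, P x -> P y -> P (a *: x + y)) ->
  exists U : {vspace W}, forall x, x \in U <-> P x.
Proof.
move=> P0 Pc.
have PD x y : P x -> P y -> P (x + y) by move=> *; rewrite -[x]scale1r; apply: Pc.
have PZ a x : P x -> P (a *: x) by move=> *; rewrite -[_ *: _]addr0; apply: Pc.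
have step : forall U0 : {vspace W}, (forall x, x \in U0 -> P x) ->
    (forall x, x \in U0 <-> P x) \/
    exists U1 : {vspace W}, (forall x, x \in U1 -> P x) /\ (\dim U0 < \dim U1)%N.
  move=> U0 hU0; case: (classic (forall x, P x -> x \in U0)) => [h|].
    by left=> x; split; [apply: hU0 | apply: h].
  move=> /not_all_ex_not [x hx]; have [Px nx] := imply_to_and _ _ hx; right.
  exists (U0 + <[x]>)%VS; split.
    move=> y /memv_addP [u Hu [v /vlineP [k ->] ->]].
    by rewrite addrC; apply: Pc => //; apply: hU0.
  rewrite (ltn_leqif (dimv_leqif_sup (addvSl U0 <[x]>))).
  apply/negP => /subvP h; apply: nx; apply: h.
  apply/memv_addP; exists 0; first exact: mem0v.
  by exists x; [exact: memv_line | rewrite add0r].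
suff : forall n (U0 : {vspace W}), (\dim (fullv : {vspace W}) - \dim U0 <= n)%N ->
   (forall x, x \in U0 -> P x) -> exists U : {vspace W}, forall x, x \in U <-> P x.
  move=> H; apply: (H _ 0%VS) => [|x]; first by apply: leq_subr.
  by rewrite memv0 => /eqP ->.
elim=> [|n IH] U0 hd hU0.
  case: (step U0 hU0) => [h|[U1 [hU1 hlt]]]; first by exists U0.
  have := dimvS (subvf U1); lia.
case: (step U0 hU0) => [h|[U1 [hU1 hlt]]]; first by exists U0.
apply: (IH U1) => //; have := dimvS (subvf U1); lia.
Qed.

Lemma proj_ex (U X : {vspace W}) : (U :&: X = 0)%VS -> (U + X = fullv)%VS ->
  exists p : W -> subvs_of U,
    [/\ lin p, (forall x, x - vsval (p x) \in X) &
        (forall x (y : subvs_of U), x - vsval y \in X -> p x = y)].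
Proof.
move=> hcap hsum.
have uniq x (y1 y2 : subvs_of U) : x - vsval y1 \in X -> x - vsval y2 \in X -> y1 = y2.
  move=> h1 h2; apply: val_inj => /=; apply/eqP; rewrite -subr_eq0 -memv0 -hcap.
  rewrite memv_cap; apply/andP; split; first by rewrite memvB // subvsP.
  have -> : vsval y1 - vsval y2 = (x - vsval y2) - (x - vsval y1).
    by rewrite [RHS]addrC opprB addrA subrK.
  by rewrite memvB.
have hex x : exists y : subvs_of U, x - vsval y \in X.
  have : x \in (U + X)%VS by rewrite hsum memvf.
  case/memv_addP => u Hu [v Hv ->]; exists (vsproj U u).
  by rewrite vsprojK // addrC addKr.
pose p x := proj1_sig (constructive_indefinite_description _ (hex x)).
have hp x : x - vsval (p x) \in X by rewrite /p; case: constructive_indefinite_description.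
exists p; split => //; last by move=> x y hy; apply: (uniq x) => //.
move=> a x y; apply: (uniq (a *: x + y)) => //.
rewrite linearD linearZ /= scalerN addrACA -scalerBr.
by apply: memvD; [apply: memvZ|].
Qed.
End VspaceFacts.



Section Lie.
Variables (R : realType) (V : vectType R) (br : V -> V -> V) (J : V -> V).
Hypothesis HL : is_Lie_bracket br.
Hypothesis HJ : abelian_cs br J.

Lemma brDr x y z : br x (y + z) = br x y + br x z.
Proof. by case: HL => h _ _ _; apply: linD. Qed.
Lemma brDl x y z : br (x + y) z = br x z + br y z.
Proof. by case: HL => _ h _ _; apply: (linD (h z)). Qed.
Lemma brZr a x y : br x (a *: y) = a *: br x y.
Proof. by case: HL => h _ _ _; apply: linZ. Qed.
Lemma brZl a x y : br (a *: x) y = a *: br x y.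
Proof. by case: HL => _ h _ _; apply: (linZ (h y)). Qed.
Lemma br0r x : br x 0 = 0. Proof. by apply: addf0; apply: brDr. Qed.
Lemma br0l x : br 0 x = 0. Proof. by apply: (addf0 (g := fun y => br y x)) => *; apply: brDl. Qed.
Lemma brNr x y : br x (- y) = - br x y. Proof. by apply: addfN; apply: brDr. Qed.
Lemma brNl x y : br (- x) y = - br x y.
Proof. by apply: (addfN (g := fun z => br z y)) => *; apply: brDl. Qed.
Lemma brBr x y z : br x (y - z) = br x y - br x z. Proof. by rewrite brDr brNr. Qed.
Lemma brBl x y z : br (x - y) z = br x z - br y z. Proof. by rewrite brDl brNl. Qed.
Lemma brxx x : br x x = 0. Proof. by case: HL. Qed.
Lemma brC x y : br x y = - br y x.
Proof.
have := brxx (x + y); rewrite brDl !brDr !brxx add0r addr0 => /eqP.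
by rewrite addr_eq0 => /eqP.
Qed.
Lemma brJac x y z : br x (br y z) = br (br x y) z + br y (br x z).
Proof.
case: HL => _ _ _ /(_ x y z) /eqP; rewrite -addrA addr_eq0 => /eqP ->.
by rewrite (brC (br x y) z) (brC x z) brNr opprD addrC.
Qed.

Lemma JD x y : J (x + y) = J x + J y. Proof. by case: HJ => h _ _; apply: linD. Qed.
Lemma JZ a x : J (a *: x) = a *: J x. Proof. by case: HJ => h _ _; apply: linZ. Qed.
Lemma J0 : J 0 = 0. Proof. by apply: addf0; apply: JD. Qed.
Lemma JN x : J (- x) = - J x. Proof. by apply: addfN; apply: JD. Qed.
Lemma JB x y : J (x - y) = J x - J y. Proof. by rewrite JD JN. Qed.
Lemma JJ x : J (J x) = - x. Proof. by case: HJ. Qed.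
Lemma brJJ x y : br (J x) (J y) = br x y. Proof. by case: HJ. Qed.
Lemma brJl x y : br (J x) y = - br x (J y).
Proof. by rewrite -brJJ JJ brNl. Qed.

Lemma ac1 (M : zmodType) (a1 b1 a2 b2 a3 b3 a4 b4 : M) :
  a1 + b1 - (a2 + b2) - (a3 + b3 + (a4 + b4)) =
  a1 - a4 - (a2 + a3) + (b1 - b3 - (b2 + b4)).
Proof.
rewrite (addrACA a3) (opprD a2) (opprD (a3 + a4)) (addrACA a1) (addrACA (a1 - a2)).
congr (_ + _); rewrite -!addrA; congr (_ + _); rewrite -!opprD; congr (- _).
  by rewrite addrA [RHS]addrC.
by rewrite addrCA.
Qed.
Lemma ac2 (M : zmodType) (a1 b1 a2 b2 a3 b3 a4 b4 : M) :
  a1 + b1 + (a2 + b2) + (a3 + b3 - (a4 + b4)) =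
  a1 - a4 + (a2 + a3) + (b1 + b3 + (b2 - b4)).
Proof.
rewrite (addrACA a1) (opprD a4) (addrACA a3) (addrACA (a1 + a2)).
congr (_ + _); rewrite -!addrA; congr (_ + _).
  by rewrite addrA addrC.
by rewrite addrCA.
Qed.

Lemma pairD (a b c d : V) : (a, b) + (c, d) = (a + c, b + d) :> (V * V)%type.
Proof. by []. Qed.
Lemma pairN (a b : V) : - (a, b) = (- a, - b) :> (V * V)%type.
Proof. by []. Qed.

Definition brT (X Y : (V * V)%type) : (V * V)%type :=
  (br X.1 Y.1 - br X.2 Y.2, br X.1 Y.2 + br X.2 Y.1).

Lemma brTDl X Y Z : brT (X + Y) Z = brT X Z + brT Y Z.
Proof.
case: X Y Z => [x1 x2] [y1 y2] [z1 z2]; rewrite /brT /=.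
by rewrite !brDl pairD opprD addrACA [in X in (_, X)]addrACA.
Qed.
Lemma brTDr X Y Z : brT X (Y + Z) = brT X Y + brT X Z.
Proof.
case: X Y Z => [x1 x2] [y1 y2] [z1 z2]; rewrite /brT /=.
by rewrite !brDr pairD opprD addrACA [in X in (_, X)]addrACA.
Qed.
Lemma brTC X Y : brT X Y = - brT Y X.
Proof.
case: X Y => [x1 x2] [y1 y2]; rewrite /brT /=.
rewrite pairN (brC x1) (brC x2 y2) (brC x1 y2) (brC x2 y1) opprD opprK.
by congr pair; rewrite opprD addrC.
Qed.
Lemma brTJac X Y Z : brT X (brT Y Z) = brT (brT X Y) Z + brT Y (brT X Z).
Proof.
case: X Y Z => [x1 x2] [y1 y2] [z1 z2]; rewrite /brT /=.
rewrite !(brBr, brDr, brBl, brDl, brNr, brNl).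
rewrite (brJac x1 y1 z1) (brJac x1 y2 z2) (brJac x2 y1 z2) (brJac x2 y2 z1).
rewrite (brJac x1 y1 z2) (brJac x1 y2 z1) (brJac x2 y1 z1) (brJac x2 y2 z2).
by rewrite pairD; congr pair; [apply: ac1 | apply: ac2].
Qed.

Definition PA (w : (V * V)%type) := w.2 = - J w.1.
Definition PB (w : (V * V)%type) := w.2 = J w.1.

Lemma PA_ab a a' : PA a -> PA a' -> brT a a' = 0.
Proof.
case: a a' => [p q] [p' q'] Ha Ha'; rewrite /PA /= in Ha Ha'.
rewrite /brT /= Ha Ha'.
by rewrite !(brNl, brNr) opprK brJJ subrr brJl opprK addrC subrr.
Qed.
Lemma PB_ab a a' : PB a -> PB a' -> brT a a' = 0.
Proof.
case: a a' => [p q] [p' q'] Ha Ha'; rewrite /PB /= in Ha Ha'.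
rewrite /brT /= Ha Ha'.
by rewrite brJJ subrr brJl subrr.
Qed.
Lemma half2 (p : V) : 2^-1 *: p + 2^-1 *: p = p.
Proof.
rewrite -scalerDl (_ : 2^-1 + 2^-1 = 1) ?scale1r //.
by field.
Qed.
Lemma PAB_dec w : exists a, exists c, [/\ PA a, PB c & w = a + c].
Proof.
case: w => p q; set hp := 2^-1 *: p; set hq := 2^-1 *: q.
exists (hp + J hq, hq - J hp), (hp - J hq, hq + J hp); split; rewrite /PA /PB /=.
- by rewrite JD JJ opprD opprK addrC.
- by rewrite JB JJ opprK addrC.
rewrite pairD (addrACA hp) subrr addr0 (addrACA hq) addNr addr0.
by rewrite /hp /hq !half2.
Qed.

Lemma brTNl X Y : brT (- X) Y = - brT X Y.
Proof. by apply: (addfN (g := fun Z => brT Z Y)) => *; apply: brTDl. Qed.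
Lemma brTNr X Y : brT X (- Y) = - brT X Y.
Proof. by apply: addfN; apply: brTDr. Qed.

Lemma metabelian x y u v : br (br x y) (br u v) = 0.
Proof.
have rb a b : brT (a, 0) (b, 0) = (br a b, 0).
  by rewrite /brT /= !br0l !br0r subr0 add0r.
have ito' := ito brTDl brTDr brTC brTJac PA_ab PB_ab PAB_dec.
suff : brT (brT (x, 0) (y, 0)) (brT (u, 0) (v, 0)) = 0.
  by rewrite !rb => /(congr1 fst).
have ex2 a b : exists P Q, [/\ brT (a, 0) (b, 0) = P - Q,
   (exists a1 c1, [/\ PA a1, PB c1 & P = brT a1 c1]) &
   (exists a1 c1, [/\ PA a1, PB c1 & Q = brT a1 c1])].
  have [aa [ca [Aa Ba ->]]] := PAB_dec (a, 0).
  have [ab [cb [Ab Bb ->]]] := PAB_dec (b, 0).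
  exists (brT aa cb), (brT ab ca); split; last 2 first.
  - by exists aa, cb.
  - by exists ab, ca.
  rewrite !brTDl !brTDr (PA_ab Aa Ab) (PB_ab Ba Bb) add0r addr0.
  by rewrite (brTC ca ab).
have [P [Q [-> [a1 [c1 [A1 B1 ->]]] [a2 [c2 [A2 B2 ->]]]]]] := ex2 x y.
have [P' [Q' [-> [a3 [c3 [A3 B3 ->]]] [a4 [c4 [A4 B4 ->]]]]]] := ex2 u v.
rewrite !(brTDl, brTDr, brTNl, brTNr).
by rewrite !ito' // !(oppr0, addr0).
Qed.

Lemma step_abelian (Nv : {vspace V}) :
  (forall x y, br x y \in Nv) -> (forall x, x \in Nv -> J x \in Nv) ->
  exists (A : vectType R) (m : A -> A -> A),
    comm_assoc_alg m /\
    exists (h : vectType R) (brh : h -> h -> h) (Jh : h -> h),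
      central_ext_of_aff brh Jh m /\ quotient_holo_iso br J Nv fullv brh Jh.
Proof.
move=> Nbr NJ.
have hc : (Nv^C :&: Nv = 0)%VS by rewrite capvC capv_compl.
have hs : (Nv^C + Nv = fullv)%VS by rewrite addvC addv_complf.
have [q [qlin qP quniq]] := proj_ex hc hs.
pose Jh (u : subvs_of (Nv^C)%VS) := q (J (vsval u)).
have q0 x : q x = 0 <-> x \in Nv.
  split => [h0|hx]; first by have := qP x; rewrite h0 vsval0 subr0.
  by apply: quniq; rewrite vsval0 subr0.
have qv y : q (vsval y) = y by apply: quniq; rewrite subrr mem0v.
have qJ x : q (J x) = Jh (q x).
  apply: quniq.
  have -> : J x - vsval (Jh (q x)) = J (x - vsval (q x)) + (J (vsval (q x)) - vsval (Jh (q x))).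
    by rewrite JB addrA subrK.
  by rewrite memvD // NJ.
pose A := subvs_of (0%VS : {vspace V}).
have A0 (a : A) : a = 0.
  by apply: (can_inj vsvalK); have := subvsP a; rewrite memv0 => /eqP ->; rewrite vsval0.
exists A, (fun _ _ => 0); split.
  by split => // a k x y /=; rewrite scaler0 addr0.
exists (subvs_of (Nv^C)%VS), (fun _ _ => 0), Jh; split.
  split.
  - by split => // [a k x y|a k x y|x y z] /=; rewrite ?scaler0 ?addr0.
  - split => //.
      by move=> a x y; rewrite /Jh vsvalD vsvalZ JD JZ qlin.
    move=> y; have -> : Jh (Jh y) = Jh (q (J (vsval y))) by [].
    by rewrite -qJ JJ (linN qlin) qv.
  - by [].
  - exists (fun _ => 0); split.
    + by move=> a x y /=; rewrite scaler0 addr0.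
    + by case=> a b; exists 0; rewrite (A0 a) (A0 b).
    + by [].
    + by move=> x y; rewrite /aff_bracket /= subrr.
    + by move=> x; rewrite /aff_J /= oppr0.
exists q; split => //.
- by move=> y; exists (vsval y); [exact: memvf | exact: qv].
- by move=> x y hx hy; apply/q0; exact: Nbr.
Qed.

Section Construct.
Variables (Aa JA Z : {vspace V}).
Hypothesis HAbr : forall x y, br x y \in Aa.
Hypothesis HAab : forall u v, u \in Aa -> v \in Aa -> br u v = 0.
Hypothesis HJA : forall w, w \in JA <-> J w \in Aa.
Let N := (Aa + JA)%VS.
Hypothesis HZ : forall x, x \in Z <-> (x \in N /\ forall y, y \in N -> br x y = 0).
Let C := (Aa :\: Z)%VS.

Lemma AN a : a \in Aa -> a \in N.
Proof. by move=> ha; move/subvP: (addvSl Aa JA); apply. Qed.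
Lemma JAa a : a \in Aa -> J a \in N.
Proof.
move=> ha; move/subvP: (addvSr Aa JA); apply; apply/HJA.
by rewrite JJ memvN.
Qed.
Lemma memN x : x \in N -> exists a, exists a', [/\ a \in Aa, a' \in Aa & x = a + J a'].
Proof.
case/memv_addP => a ha [b hb ->]; exists a, (- J b); split => //.
  by rewrite memvN; apply/HJA.
by rewrite JN JJ opprK.
Qed.
Lemma brN x y : br x y \in N. Proof. exact: AN. Qed.
Lemma NJ x : x \in N -> J x \in N.
Proof.
case/memN => a [a' [ha ha' ->]]; rewrite JD JJ.
by apply: memvD; [apply: JAa | rewrite memvN; apply: AN].
Qed.
Lemma ZN z : z \in Z -> z \in N. Proof. by case/HZ. Qed.
Lemma Zl z y : z \in Z -> y \in N -> br z y = 0. Proof. by case/HZ => _ h; apply: h. Qed.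
Lemma Zr z y : z \in Z -> y \in N -> br y z = 0.
Proof. by move=> hz hy; rewrite brC (Zl hz hy) oppr0. Qed.
Lemma ZJ z : z \in Z -> J z \in Z.
Proof.
move=> hz; apply/HZ; split; first by apply: NJ; apply: ZN.
by move=> y hy; rewrite brJl (Zl hz (NJ hy)) oppr0.
Qed.
Lemma CA c : c \in C -> c \in Aa. Proof. by move=> hc; move/subvP: (diffvSl Aa Z); apply. Qed.
Lemma CZ c : c \in C -> c \in Z -> c = 0.
Proof.
move=> h1 h2; apply/eqP; rewrite -memv0 -(capv_diff Aa Z) memv_cap.
by apply/andP.
Qed.
Lemma indep c c' : c \in C -> c' \in C -> c + J c' \in Z -> c = 0 /\ c' = 0.
Proof.
move=> hc hc' hv.
have hcz : c \in Z.
  apply/HZ; split; first by apply: AN; apply: CA.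
  move=> y /memN [a [a' [ha ha' ->]]]; rewrite brDr (HAab (CA hc) ha) add0r.
  have := Zl hv (JAa ha'); rewrite brDl brJJ (HAab (CA hc') ha') addr0 //.
have c0 := CZ hc hcz; split => //.
move: hv; rewrite c0 add0r => /ZJ; rewrite JJ memvN; exact: CZ.
Qed.

Definition Dec x c c' := x - (c + J c') \in Z.

Lemma dec_uniq x c1 c1' c2 c2' : c1 \in C -> c1' \in C -> c2 \in C -> c2' \in C ->
  Dec x c1 c1' -> Dec x c2 c2' -> c1 = c2 /\ c1' = c2'.
Proof.
move=> h1 h1' h2 h2' d1 d2.
have : (c1 - c2) + J (c1' - c2') \in Z.
  have -> : (c1 - c2) + J (c1' - c2') = (x - (c2 + J c2')) - (x - (c1 + J c1')).
    by rewrite [RHS]addrC opprB addrA subrK JB opprD addrACA.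
  by apply: memvB.
case/indep; try by apply: memvB.
by move=> /eqP; rewrite subr_eq0 => /eqP -> /eqP; rewrite subr_eq0 => /eqP ->.
Qed.

Lemma decA a : a \in Aa -> exists2 c, c \in C & a - c \in Z.
Proof.
move=> ha; have : a \in (C + (Aa :&: Z))%VS by rewrite /C addv_diff_cap.
case/memv_addP => c hc [z /memv_capP [_ hz] ->]; exists c => //.
by rewrite addrC addKr.
Qed.

Lemma dec_ex x : x \in N -> exists c, exists c', [/\ c \in C, c' \in C & Dec x c c'].
Proof.
case/memN => a [a' [ha ha' ->]].
have [c hc hz1] := decA ha; have [c' hc' hz2] := decA ha'.
exists c, c'; split => //; rewrite /Dec.
have -> : a + J a' - (c + J c') = (a - c) + J (a' - c').
  by rewrite JB opprD addrACA.
by apply: memvD => //; apply: ZJ.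
Qed.

Let A := subvs_of C.
Let vinjC := can_inj (@vsvalK _ _ C).

Definition G (x : V) : (A * A)%type :=
  epsilon (inhabits 0) (fun p : (A * A)%type => Dec x (vsval p.2) (vsval p.1)).

Lemma G_spec x : x \in N -> Dec x (vsval (G x).2) (vsval (G x).1).
Proof.
move=> hx; rewrite /G; apply: (epsilon_spec (inhabits 0) (fun p : (A * A)%type => Dec x (vsval p.2) (vsval p.1))).
have [c [c' [hc hc' hd]]] := dec_ex hx.
by exists (vsproj C c', vsproj C c) => /=; rewrite !vsprojK.
Qed.

Lemma G_eq x (c c' : A) : x \in N -> Dec x (vsval c) (vsval c') -> G x = (c', c).
Proof.
move=> hx hd; have hs := G_spec hx.
case E: (G x) hs => [p1 p2] /= hs.
have [e1 e2] := dec_uniq (subvsP c) (subvsP c') (subvsP p2) (subvsP p1) hd hs.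
by rewrite (vinjC e1) (vinjC e2).
Qed.

Lemma G_lin a x y : x \in N -> y \in N -> G (a *: x + y) = a *: G x + G y.
Proof.
move=> hx hy; apply: G_eq; first by apply: memvD => //; apply: memvZ.
rewrite /Dec /= JD JZ.
rewrite (addrACA (a *: vsval (G x).2)) opprD addrACA -scalerDr -scalerBr.
by apply: memvD; [apply: memvZ|]; apply: G_spec.
Qed.

Lemma G_Z x : x \in Z -> G x = 0.
Proof.
move=> hz; apply: (G_eq (c := 0) (c' := 0)); first exact: ZN.
by rewrite /Dec vsval0 J0 addr0 subr0.
Qed.

Lemma G_D x y : x \in N -> y \in N -> G (x + y) = G x + G y.
Proof. by move=> hx hy; rewrite -[x in LHS]scale1r G_lin // scale1r. Qed.
Lemma G_N x : x \in N -> G (- x) = - G x.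
Proof.
move=> hx; apply: G_eq; first by rewrite memvN.
rewrite /Dec /= JN -(opprD (vsval (G x).2)) opprK.
have -> : - x + (vsval (G x).2 + J (vsval (G x).1)) = - (x - (vsval (G x).2 + J (vsval (G x).1))).
  by rewrite opprB addrC.
by rewrite memvN; apply: G_spec.
Qed.
Lemma G_B x y : x \in N -> y \in N -> G (x - y) = G x - G y.
Proof. by move=> hx hy; rewrite G_D ?G_N // memvN. Qed.

Lemma G_A w : w \in Aa -> (G w).1 = 0.
Proof.
move=> hw; have [c hc hz] := decA hw.
rewrite (G_eq (c := vsproj C c) (c' := 0)) ?AN //.
by rewrite /Dec vsprojK // vsval0 J0 addr0.
Qed.

Lemma G_A2 w : w \in Aa -> w - vsval (G w).2 \in Z.
Proof.
move=> hw; have := G_spec (AN hw); by rewrite /Dec G_A // raddf0 J0 addr0.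
Qed.

Lemma G_0 x : x \in N -> G x = 0 -> x \in Z.
Proof. by move=> hx e; have := G_spec hx; rewrite e /Dec /= J0 addr0 subr0. Qed.

Lemma N_ideal : lie_ideal br N /\ J_stable J N.
Proof. by split => [x y _|x]; [apply: brN | apply: NJ]. Qed.

Lemma expand z1 a1 a1' z2 a2 a2' : z1 \in Z -> z2 \in Z ->
  a1 \in Aa -> a1' \in Aa -> a2 \in Aa -> a2' \in Aa ->
  br (z1 + (a1 + J a1')) (z2 + (a2 + J a2')) = br (J a1') a2 - br (J a2') a1.
Proof.
move=> hz1 hz2 h1 h1' h2 h2'.
have hN2 : a2 + J a2' \in N by apply: memvD; [apply: AN | apply: JAa].
have hN1 : a1 + J a1' \in N by apply: memvD; [apply: AN | apply: JAa].
rewrite brDl (Zl hz1 (memvD (ZN hz2) hN2)) add0r brDr (Zr hz2 hN1) add0r.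
rewrite !brDl !brDr (HAab h1 h2) add0r brJJ (HAab h1' h2') addr0.
by rewrite (brC a1) addrC.
Qed.

Lemma step_N : exists (A : vectType R) (m : A -> A -> A),
    comm_assoc_alg m /\
    exists (h : vectType R) (brh : h -> h -> h) (Jh : h -> h),
      central_ext_of_aff brh Jh m /\ quotient_holo_iso br J 0 N brh Jh.
Proof.
have [pN [pNlin pNP pNuniq]] := proj_ex (capv_compl N) (addv_complf N).
have pNv x : x \in N -> vsval (pN x) = x.
  move=> hx; apply/eqP; rewrite -subr_eq0 -memv0 -(capv_compl N) memv_cap.
  apply/andP; split; first by apply: memvB => //; exact: subvsP.
  by rewrite -opprB memvN pNP.
have vinj := can_inj (@vsvalK _ _ N).
pose brh (u v : subvs_of N) := pN (br (vsval u) (vsval v)).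
pose Jh (u : subvs_of N) := pN (J (vsval u)).
have vbrh u v : vsval (brh u v) = br (vsval u) (vsval v) by rewrite pNv // brN.
have vJh u : vsval (Jh u) = J (vsval u) by rewrite pNv // NJ // subvsP.
pose m (a b : A) : A := (G (br (J (vsval a)) (vsval b))).2.
have mC (a b : A) : m a b = m b a by rewrite /m brJl -brC.
have mval (a b c : A) : br (J (vsval a)) (vsval (m b c)) = br (J (vsval a)) (br (J (vsval b)) (vsval c)).
  have hz := G_A2 (HAbr (J (vsval b)) (vsval c)).
  have := Zr hz (JAa (CA (subvsP a))); rewrite brBr => /eqP; rewrite subr_eq0 => /eqP ->.
  by [].
have mlc (a b c : A) : m a (m b c) = m b (m a c).
  rewrite /m -/(m b c) -/(m a c) !mval brJac brJJ (HAab (CA (subvsP a)) (CA (subvsP b))).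
  by rewrite br0l add0r.
exists A, m; split.
  split.
  - by move=> a k x y; rewrite /m /= brDr brZr G_lin ?brN.
  - by move=> b k x y; rewrite /m /= JD JZ brDl brZl G_lin ?brN.
  - exact: mC.
  - move=> a b c; rewrite [RHS]mC [in RHS](mC a b) [RHS]mlc [in RHS](mC c a) [RHS]mlc //.
exists (subvs_of N), brh, Jh; split.
  split.
  - split.
    + by move=> x k y z; apply: vinj; rewrite /= vbrh !linearP !vbrh /= brDr brZr.
    + by move=> x k y z; apply: vinj; rewrite /= vbrh !linearP !vbrh /= brDl brZl.
    + by move=> x; apply: vinj; rewrite vbrh brxx raddf0.
    + move=> x y z; apply: vinj; rewrite !vsvalD !vbrh raddf0.
      by case: HL.
  - split.
    + by move=> k x y; apply: vinj; rewrite vJh !linearP /= JD JZ !vJh.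
    + by move=> x; apply: vinj; rewrite !vJh JJ raddfN.
    + by move=> x y; apply: vinj; rewrite !vbrh !vJh brJJ.
  - move=> x hx y; apply: vinj; rewrite vbrh vJh brJl -vJh -vbrh hx !raddf0 //.
  - exists (fun u => G (vsval u)); split.
    + by move=> k x y; rewrite linearP /= G_lin // subvsP.
    + case=> b a; exists (pN (vsval a + J (vsval b))).
      have hxN : vsval a + J (vsval b) \in N.
        by apply: memvD; [apply: AN; apply: CA; apply: subvsP | apply: JAa; apply: CA; apply: subvsP].
      rewrite pNv //; apply: G_eq => //; rewrite /Dec subrr mem0v //.
    + move=> x; split.
        move=> gx0 y; apply: vinj.
        have xZ : vsval x \in Z by apply: G_0 => //; apply: subvsP.
        by rewrite vbrh (Zl xZ (subvsP y)) raddf0.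
      move=> hc; apply: G_Z; apply/HZ; split; first exact: subvsP.
      move=> y hy; have := hc (pN y); move/(congr1 vsval); rewrite vbrh pNv //.
    + move=> x y; rewrite vbrh.
      set c1 := (G (vsval x)).2; set c1' := (G (vsval x)).1.
      set c2 := (G (vsval y)).2; set c2' := (G (vsval y)).1.
      have hx := G_spec (subvsP x); have hy := G_spec (subvsP y).
      rewrite /Dec -/c1 -/c1' -/c2 -/c2' in hx hy.
      have E : br (vsval x) (vsval y) = br (J (vsval c1')) (vsval c2) - br (J (vsval c2')) (vsval c1).
        rewrite -[vsval x](subrK (vsval c1 + J (vsval c1'))).
        rewrite -[vsval y](subrK (vsval c2 + J (vsval c2'))).
        by rewrite expand //; apply: CA; apply: subvsP.
      rewrite E G_B ?brN //.
      rewrite /aff_bracket /m.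
      have e1 := G_A (HAbr (J (vsval c1')) (vsval c2)).
      have e2 := G_A (HAbr (J (vsval c2')) (vsval c1)).
      move: e1 e2; case: (G (br (J (vsval c1')) (vsval c2))) => p1 q1.
      case: (G (br (J (vsval c2')) (vsval c1))) => p2 q2 /= -> ->.
      by rewrite (_ : (0, q1) - (0, q2) = (0 - 0, q1 - q2)) // subrr.
    + move=> x; rewrite vJh /aff_J.
      have hx := G_spec (subvsP x).
      apply: G_eq; first exact: (NJ (subvsP x)).
      rewrite /Dec raddfN.
      have -> : J (vsval x) - (- vsval (G (vsval x)).1 + J (vsval (G (vsval x)).2)) =
               J (vsval x - (vsval (G (vsval x)).2 + J (vsval (G (vsval x)).1))).
        by rewrite JB JD JJ [- vsval _ + _]addrC.
      by apply: ZJ.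
exists pN; split => //.
- by move=> y; exists (vsval y); [exact: subvsP | apply: vinj; rewrite pNv // subvsP].
- move=> x hx; split.
    by move/(congr1 vsval); rewrite pNv // raddf0 => ->; rewrite mem0v.
  by rewrite memv0 => /eqP ->; apply: lin0.
- move=> x y hx hy; apply: (can_inj (@vsvalK _ _ N)); rewrite vbrh !pNv ?brN //.
- move=> x hx; apply: (can_inj (@vsvalK _ _ N)); rewrite vJh !pNv ?NJ //.
Qed.

End Construct.

End Lie.

Unset Implicit Arguments.

Theorem mainTheorem1 (R : realType) (V : vectType R) (br : V -> V -> V) (J : V -> V) :
  is_Lie_bracket br -> abelian_cs br J ->
  exists (r : nat) (s : nat -> {vspace V}),
    [/\ s 0%N = 0%VS, s r = fullv,
        (forall j, (j < r)%N -> (s j <= s j.+1)%VS),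
        (forall j, (j <= r)%N -> lie_ideal br (s j) /\ J_stable J (s j)) &
        (forall j, (0 < j <= r)%N ->
           exists (A : vectType R) (m : A -> A -> A),
             comm_assoc_alg m /\
             exists (h : vectType R) (brh : h -> h -> h) (Jh : h -> h),
               central_ext_of_aff brh Jh m /\
               quotient_holo_iso br J (s j.-1) (s j) brh Jh)].
Proof.
move=> HL HJ.
have [Aa hAa] := @pred_vspace _ V (fun x => forall U : {vspace V}, (forall a b, br a b \in U) -> x \in U)
  (fun U _ => mem0v U)
  (fun k x y hx hy U hU => memvD (memvZ k (hx U hU)) (hy U hU)).
have HAbr x y : br x y \in Aa by apply/hAa => U hU; exact: hU.
have Aind (Q : V -> Prop) : Q 0 -> (forall a x y, Q x -> Q y -> Q (a *: x + y)) ->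
    (forall a b, Q (br a b)) -> forall x, x \in Aa -> Q x.
  move=> Q0 Qc Qb x hx; have [U hU] := pred_vspace Q0 Qc.
  by apply/hU; move/hAa: hx; apply=> a b; apply/hU.
have HAab u v : u \in Aa -> v \in Aa -> br u v = 0.
  move=> hu; move: u hu v; apply: (Aind).
  - by move=> v _; apply: br0l.
  - by move=> k x y hx hy v hv; rewrite brDl // brZl // hx // hy // scaler0 addr0.
  move=> a b; apply: (Aind).
  - exact: br0r.
  - by move=> k x y hx hy; rewrite brDr // brZr // hx hy scaler0 addr0.
  by move=> c d; exact: (metabelian HL HJ).
have [JA hJA] : exists U : {vspace V}, forall x, x \in U <-> J x \in Aa.
  apply: pred_vspace.
  - by rewrite (J0 HJ) mem0v.
  - by move=> k x y hx hy; rewrite (JD HJ) (JZ HJ); apply: memvD => //; apply: memvZ.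
pose N := (Aa + JA)%VS.
have [Z hZ] : exists U : {vspace V}, forall x, x \in U <-> (x \in N /\ forall y, y \in N -> br x y = 0).
  apply: pred_vspace.
  - by split; [apply: mem0v | move=> y _; apply: br0l].
  - move=> k x y [hx hx'] [hy hy']; split; first by apply: memvD => //; apply: memvZ.
    by move=> z hz; rewrite brDl // brZl // hx' // hy' // scaler0 addr0.
have [NI NS] := N_ideal HJ HAbr hJA.
exists 2%N, (fun j => if j == 0%N then 0%VS else if j == 1%N then N else fullv); split => //.
- by case=> [|[|]] //= _; [apply: sub0v | apply: subvf].
- case=> [|[|[|]]] //= _.
  + split; first by move=> x y; rewrite !memv0 => /eqP ->; rewrite br0r.
    by move=> x; rewrite !memv0 => /eqP ->; rewrite (J0 HJ).
  + split => x *; [exact: memvf | exact: memvf].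
- case=> [|[|[|]]] //= _.
  + by have := step_N HL HJ HAbr HAab hJA; apply; exact: hZ.
  + by apply: step_abelian => // x y; apply/memv_addP; exists (br x y) => //; exists 0; [exact: mem0v | rewrite addr0].
Qed.
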